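(* Let $\mathcal{G}=(\mathcal{V},\mathcal{E})$ be a finite, connected, unweighted, undirected graph, let $u,v\in\mathcal{V}$, and let $k\ge 1$. Suppose the $k$-hop ego-graphs $\mathcal{B}(u,k)$ and $\mathcal{B}(v,k)$ are not isomorphic as rooted graphs, with roots $u$ and $v$ respectively. Let $m$ be the maximum of the numbers of edges of $\mathcal{B}(u,k)$ and $\mathcal{B}(v,k)$. Then there is a length $l=O(m)$ such that the distribution of anonymous paths of length-$l$ random walks started at $u$ differs from the distribution of anonymous paths of length-$l$ random walks started at $v$.
   Context: The $k$-hop ego-graph $\mathcal{B}(v,k)$ is the subgraph of $\mathcal{G}$ induced by all nodes at shortest-path distance at most $k$ from $v$; it is rooted at $v$. A random walk of length $l$ started at $v$ is a node sequence $w=(v_0,\dots,v_l)$ with $v_0=v$ and $P(v_{i+1}\mid v_0,\dots,v_i)=\mathbb{1}[(v_i,v_{i+1})\in\mathcal{E}]/D(v_i)$, where $D(v_i)$ is the degree of $v_i$. The anonymous path of $w$ is $\phi=(\gamma_0,\dots,\gamma_l)$ with $\gamma_i=\min\{j: v_j=v_i\}$. Thus $\gamma_i$ is the first position in $w$ at which node $v_i$ occurs. *)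

(* Defs.v *)
(* Simple graphs as symmetric irreflexive relations on a finType. *)
From HB Require Import structures.
From mathcomp Require Import all_boot all_order all_algebra.
Set Implicit Arguments. Unset Strict Implicit. Unset Printing Implicit Defensive.
Import Order.TTheory GRing.Theory Num.Theory.

Section Defs.
Variables (T : finType) (e : rel T).

(* node set of the k-hop ego-graph B(v,k): nodes x reachable from v by a walk
   of length n <= k, i.e. shortest-path distance d(v,x) <= k *)
Definition ball (v : T) (k : nat) : {set T} :=
  [set x | [exists n : 'I_k.+1,
              [exists p : (val n).-tuple T, path e v p && (last v p == x)]]].

Definition rooted_iso (u v : T) (k : nat) : Prop :=
  exists f : T -> T,
    [/\ f u = v,
        {in ball u k &, injective f},
        {in ball u k, forall x, f x \in ball v k},
        (forall y, y \in ball v k -> exists2 x, x \in ball u k & f x = y) &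
        {in ball u k &, forall x y, e x y = e (f x) (f y)}].

(* number of (undirected) edges of B(v,k): ordered adjacent pairs halved *)
Definition nedges (v : T) (k : nat) : nat :=
  (#|[set p : T * T | [&& p.1 \in ball v k, p.2 \in ball v k & e p.1 p.2]]|)./2.

Definition deg (x : T) : nat := #|[set y | e x y]|.

Fixpoint walk_prob (x : T) (w : seq T) : rat :=
  match w with
  | [::] => 1
  | y :: w' => ((e x y)%:R / (deg x)%:R) * walk_prob y w'
  end%R.

Definition anon (w : seq T) : seq nat := [seq index x w | x <- w].

Definition anon_dist (v : T) (l : nat) (phi : seq nat) : rat :=
  (\sum_(w : l.-tuple T | anon (v :: w) == phi) walk_prob v w)%R.

End Defs.

(* Main.v *)
Require Import Defs.
From mathcomp Require Import all_boot all_order all_algebra zify.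
Set Implicit Arguments. Unset Strict Implicit. Unset Printing Implicit Defensive.
Import Order.TTheory GRing.Theory Num.Theory.

Fixpoint cpairs (T : Type) (x : T) (p : seq T) : seq (T * T) :=
  match p with [::] => [::] | y :: p' => (x, y) :: cpairs y p' end.

Lemma cpairs_cat (T : Type) (x : T) p q :
  cpairs x (p ++ q) = cpairs x p ++ cpairs (last x p) q.
Proof. by elim: p x => [|y p IH] x //=; rewrite IH. Qed.

Lemma path_cpairs (T : Type) (r : rel T) x p :
  path r x p = all (fun q => r q.1 q.2) (cpairs x p).
Proof. by elim: p x => [|y p IH] x //=; rewrite IH. Qed.

Lemma cpairs_map (T U : Type) (f : T -> U) x p :
  cpairs (f x) (map f p) = map (fun q => (f q.1, f q.2)) (cpairs x p).
Proof. by elim: p x => [|y p IH] x //=; rewrite IH. Qed.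

Lemma cpairs_mem (T : eqType) (x : T) p q :
  q \in cpairs x p -> (q.1 \in x :: p) && (q.2 \in x :: p).
Proof.
elim: p x => [|y p IH] x //=; rewrite inE => /orP [/eqP -> | /IH /andP [h1 h2]].
  by rewrite /= !inE !eqxx orbT.
by rewrite !(inE) in h1 h2 *; rewrite h1 h2 !orbT.
Qed.

Lemma walk_prob_ge0 (T : finType) (e : rel T) x w : (0 <= walk_prob e x w)%R.
Proof.
elim: w x => [|y w IH] x /=; first exact: ler01.
by rewrite mulr_ge0 // divr_ge0 // ler0n.
Qed.

Lemma walk_prob_gt0 (T : finType) (e : rel T) x w : (0 < walk_prob e x w)%R = path e x w.
Proof.
elim: w x => [|y w IH] x /=; first exact: ltr01.
case exy: (e x y); last by rewrite [(false%:R)%R]/= mul0r mul0r ltxx.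
have dpos : (0 < deg e x)%N.
  by rewrite /deg card_gt0; apply/set0Pn; exists y; rewrite inE.
rewrite pmulr_rgt0 ?IH // divr_gt0 // ?ltr0n //.
Qed.
Lemma anon_dist_gt0 (T : finType) (e : rel T) v l phi :
  (0 < anon_dist e v l phi)%R <->
  exists w : l.-tuple T, anon (v :: w) = phi /\ path e v w.
Proof.
split.
  move=> hpos.
  case: (boolP [exists w : l.-tuple T, (anon (v :: w) == phi) && path e v w]).
    by move/existsP=> [w /andP [/eqP h1 h2]]; exists w.
  move=> /existsPn hn; move: hpos; rewrite /anon_dist big1 ?ltxx // => w /eqP hw.
  have := hn w; rewrite hw eqxx /= -walk_prob_gt0 => hlt.
  apply/eqP; rewrite eq_le walk_prob_ge0 andbT.
  by rewrite leNgt.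
move=> [w [hw hp]]; rewrite /anon_dist (bigD1 w) ?hw ?eqxx //=.
apply: ltr_pwDl; first by rewrite walk_prob_gt0.
by apply: sumr_ge0 => i _; apply: walk_prob_ge0.
Qed.
Lemma inballP (T : finType) (e : rel T) v k x :
  reflect (exists p : seq T, [/\ size p <= k, path e v p & last v p = x])
          (x \in ball e v k).
Proof.
rewrite /ball inE; apply: (iffP existsP).
  move=> [n /existsP [p /andP [hp /eqP hl]]]; exists p; split=> //.
  by rewrite size_tuple -ltnS ltn_ord.
move=> [p [hs hp hl]].
have hn : size p < k.+1 by [].
exists (Ordinal hn); apply/existsP; exists (in_tuple p).
by rewrite /= hp hl eqxx.
Qed.

Lemma ball_prefix (T : finType) (e : rel T) v k p :
  size p <= k -> path e v p -> {subset v :: p <= ball e v k}.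
Proof.
move=> hs hp x; rewrite inE => /orP [/eqP -> | hx].
  by apply/inballP; exists [::].
case/splitPr: hx hs hp => p1 p2.
rewrite -cat_rcons => hs hp; apply/inballP; exists (rcons p1 x).
rewrite cat_path in hp; case/andP: hp => hp _.
rewrite last_rcons; split=> //.
by apply: leq_trans hs; rewrite size_cat leq_addr.
Qed.
Definition Eb (T : finType) (e : rel T) v k : {set T * T} :=
  [set q : T * T | [&& q.1 \in ball e v k, q.2 \in ball e v k & e q.1 q.2]].
Definition Cov (T : finType) (v : T) W : {set T * T} :=
  [set q : T * T | (q \in cpairs v W) || ((q.2, q.1) \in cpairs v W)].

Lemma front_aux (T : finType) (e : rel T) v k W x0 q :
  x0 \in v :: W -> {subset x0 :: q <= ball e v k} -> path e x0 q ->
  has (fun r => r \notin Cov v W) (cpairs x0 q) ->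
  exists x y, [/\ x \in v :: W, (x, y) \in Eb e v k & (x, y) \notin Cov v W].
Proof.
elim: q x0 => [|y q IH] x0 //= hx0 hsub /andP [exy hp] /orP [hn | hh].
  exists x0, y; split=> //; rewrite inE /= exy !andbT.
  by rewrite !hsub // !inE eqxx ?orbT.
case hc: ((x0, y) \in Cov v W).
  apply: (IH y) => //.
    move: hc; rewrite [_ \in Cov _ _]inE; case/orP=> /cpairs_mem /andP [h1 h2] //.
  by move=> z hz; apply: hsub; rewrite inE hz orbT.
exists x0, y; split=> //.
rewrite inE /= exy !andbT.
by rewrite !hsub // !inE eqxx ?orbT.
by rewrite hc. Qed.
Lemma frontier (T : finType) (e : rel T) v k W :
  ~~ (Eb e v k \subset Cov v W) ->
  exists x y, [/\ x \in v :: W, (x, y) \in Eb e v k & (x, y) \notin Cov v W].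
Proof.
case/subsetPn=> [[a b]]; rewrite inE /= => /and3P [ha hb hab] hn.
case/inballP: ha => p [hs hp hl].
apply: (@front_aux T e v k W v (rcons p b)).
- by rewrite inE eqxx.
- move=> z; rewrite -rcons_cons mem_rcons inE => /orP [/eqP -> // | hz].
  exact: (ball_prefix hs hp).
- by rewrite rcons_path hp hl.
- apply/hasP; exists (a, b) => //.
  by rewrite -cats1 cpairs_cat hl mem_cat inE eqxx orbT.
Qed.

Definition Inv (T : finType) (e : rel T) v k W :=
  [/\ path e v W, last v W = v, ~~ odd (size W), size W <= #|Cov v W|
    & all (mem (Eb e v k)) (cpairs v W)].

Lemma splice (T : finType) (e : rel T) v k W x y :
  symmetric e -> irreflexive e ->
  Inv e v k W -> x \in v :: W -> (x, y) \in Eb e v k -> (x, y) \notin Cov v W ->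
  exists W', Inv e v k W' /\ #|Cov v W| < #|Cov v W'|.
Proof.
move=> hsym hirr [hp hl hev hsz hall] hx hE hn.
case/splitPl: W / hx hp hl hev hsz hall hn => p1 p2 hl1 hp hl hev hsz hall hn.
have hxy : e x y by move: hE; rewrite inE => /and3P [].
have hcov : forall q, q \in Cov v (p1 ++ p2) -> q \in Cov v (p1 ++ y :: x :: p2).
  move=> q; rewrite !inE !cpairs_cat hl1 /= !mem_cat !inE.
  by case/orP=> /orP [->|->]; rewrite ?orbT.
have hyx : (y, x) \notin Cov v (p1 ++ p2).
  by move: hn; rewrite !inE /= orbC.
have hne : (x, y) != (y, x).
  apply/eqP=> [[exy]]; by rewrite exy hirr in hxy.
exists (p1 ++ y :: x :: p2); split; last first.
  apply: (@leq_trans #|(x, y) |: ((y, x) |: Cov v (p1 ++ p2))|).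
    by rewrite cardsU1 cardsU1 in_setU1 (negbTE hne) /= (negbTE hn) (negbTE hyx) /= add1n ltnS leqnSn.
  apply/subset_leq_card/subsetP=> q; rewrite !inE => /orP [/eqP -> | /orP [/eqP -> | hq]].
  - by rewrite cpairs_cat hl1 /= mem_cat !inE eqxx orbT.
  - by rewrite cpairs_cat hl1 /= mem_cat !inE eqxx !orbT.
  - by have := hcov q; rewrite !inE; apply.
split.
- move: hp; rewrite !cat_path hl1 /= => /andP [-> ->]; rewrite hxy /=.
  by rewrite hsym hxy.
- by move: hl; rewrite !last_cat hl1.
- by move: hev; rewrite !size_cat /= !addnS /= negbK.
- apply: (@leq_trans #|Cov v (p1 ++ p2)|.+2).
    by rewrite !size_cat /= !addnS !ltnS -size_cat.
  apply: (@leq_trans #|(x, y) |: ((y, x) |: Cov v (p1 ++ p2))|).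
    by rewrite cardsU1 cardsU1 in_setU1 (negbTE hne) /= (negbTE hn) (negbTE hyx) /= !add1n.
  apply/subset_leq_card/subsetP=> q; rewrite !inE => /orP [/eqP -> | /orP [/eqP -> | hq]].
  - by rewrite cpairs_cat hl1 /= mem_cat !inE eqxx orbT.
  - by rewrite cpairs_cat hl1 /= mem_cat !inE eqxx !orbT.
  - by have := hcov q; rewrite !inE; apply.
- move: hall; rewrite !cpairs_cat hl1 /= !all_cat /= => /andP [-> ->].
  rewrite hE /= andbT inE /=.
  by move: hE; rewrite inE /= => /and3P [-> -> _]; rewrite hsym.
Qed.
Lemma Cov_sub (T : finType) (e : rel T) v k W :
  symmetric e -> all (mem (Eb e v k)) (cpairs v W) -> Cov v W \subset Eb e v k.
Proof.
move=> hsym /allP hall; apply/subsetP=> [[a b]]; rewrite inE /= => /orP [h | h].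
  exact: (hall _ h).
move: (hall _ h); rewrite !inE /= => /and3P [-> -> hba].
by rewrite hsym.
Qed.

Lemma cover_exists (T : finType) (e : rel T) v k :
  symmetric e -> irreflexive e ->
  exists W, Inv e v k W /\ Eb e v k \subset Cov v W.
Proof.
move=> hsym hirr.
suff H : forall n W, Inv e v k W -> #|Eb e v k| - #|Cov v W| <= n ->
    exists W', Inv e v k W' /\ Eb e v k \subset Cov v W'.
  by apply: (H _ [::] _ (leqnn _)); split.
elim=> [|n IH] W hI hn.
  exists W; split=> //.
  have [_ _ _ _ hall] := hI.
  have hs := Cov_sub hsym hall.
  have heq : Cov v W == Eb e v k.
    by rewrite eqEcard hs /= -subn_eq0 -leqn0.
  by rewrite -(eqP heq).
case: (boolP (Eb e v k \subset Cov v W)) => hsub; first by exists W.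
have [x [y [hx hE hnc]]] := frontier hsub.
have [W' [hI' hlt]] := splice hsym hirr hI hx hE hnc.
apply: (IH W' hI').
have [_ _ _ _ hall'] := hI'.
have := subset_leq_card (Cov_sub hsym hall').
lia.
Qed.
Lemma pad_path (T : finType) (e : rel T) v y j :
  symmetric e -> e v y -> path e v (flatten (nseq j [:: y; v])).
Proof.
move=> hsym hvy; elim: j => [|j IH] //=.
by rewrite hvy hsym hvy.
Qed.

Lemma size_pad (T : Type) (y v : T) j : size (flatten (nseq j [:: y; v])) = j.*2.
Proof. by elim: j => [|j IH] //=; rewrite IH doubleS. Qed.

Lemma cover_walk (T : finType) (e : rel T) v k y l :
  symmetric e -> irreflexive e -> e v y -> ~~ odd l -> #|Eb e v k| <= l ->
  exists W, [/\ path e v W, size W = l & Eb e v k \subset Cov v W].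
Proof.
move=> hsym hirr hvy hl hEl.
have [W [[hp hlast hev hsz hall] hsub]] := cover_exists v k hsym hirr.
have hWl : size W <= l.
  apply: leq_trans hsz (leq_trans _ hEl).
  exact: subset_leq_card (Cov_sub hsym hall).
pose j := l./2 - (size W)./2.
exists (W ++ flatten (nseq j [:: y; v])); split.
- by rewrite cat_path hp hlast pad_path.
- rewrite size_cat size_pad /j.
  have h1 := halfK (size W); have h2 := halfK l.
  rewrite (negbTE hev) in h1; rewrite (negbTE hl) in h2.
  have h3 : (size W)./2 <= l./2 by apply: half_leq.
  lia.
- apply: (subset_trans hsub); apply/subsetP=> q; rewrite !inE cpairs_cat !mem_cat.
  by case/orP=> ->; rewrite ?orbT.
Qed.
Lemma anon_map (T : finType) (s s' : seq T) x0 :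
  size s = size s' -> anon s = anon s' ->
  map (fun x => nth x0 s' (index x s)) s = s'.
Proof.
move=> hs ha; apply: (@eq_from_nth _ x0); first by rewrite size_map.
move=> i; rewrite size_map => hi; rewrite (nth_map x0) //.
have : nth 0 (anon s) i = nth 0 (anon s') i by rewrite ha.
rewrite /anon (nth_map x0) // (nth_map x0) -?hs // => ->.
by rewrite nth_index // mem_nth // -hs.
Qed.

Lemma embed (T : finType) (e : rel T) u v k W W' :
  symmetric e -> Eb e v k \subset Cov v W -> path e u W' ->
  size W = size W' -> anon (v :: W) = anon (u :: W') ->
  exists f : T -> T, [/\ f v = u, {in ball e v k &, injective f},
    {in ball e v k, forall x, f x \in ball e u k} &
    {in ball e v k &, forall a b, e a b -> e (f a) (f b)}].
Proof.
move=> hsym hsub hp' hsz ha.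
set s := v :: W; set s' := u :: W'.
have hs : size s = size s' by rewrite /= hsz.
pose f x := nth u s' (index x s); pose g x := nth v s (index x s').
have hm : map f s = s' by apply: anon_map.
have hmg : map g s' = s by apply: anon_map.
have hfv : f v = u by rewrite /f /s /= eqxx.
have hfW : map f W = W' by move: hm; rewrite /s /= => [[_ ->]].
have hgf : {in s, forall a, g (f a) = a}.
  move=> a ha'; set i := index a s.
  have hi : i < size s by rewrite index_mem.
  have e1 : f (nth v s i) = nth u s' i by rewrite -hm (nth_map v).
  have e2 : g (nth u s' i) = nth v s i by rewrite -hmg (nth_map u) // -hs.
  by rewrite -{1}(nth_index v ha') e1 e2 nth_index.
have hcov : forall a b, (a, b) \in Cov v W -> e (f a) (f b).
  have hall : all (fun q => e q.1 q.2) (cpairs u W') by rewrite -path_cpairs.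
  have hc : forall q, q \in cpairs v W -> (f q.1, f q.2) \in cpairs u W'.
    move=> q hq; rewrite -hfv -hfW cpairs_map.
    by apply/mapP; exists q.
  move=> a b; rewrite inE /= => /orP [h | h].
    exact: (allP hall _ (hc _ h)).
  by rewrite hsym; exact: (allP hall _ (hc _ h)).
have hedge : {in ball e v k &, forall a b, e a b -> e (f a) (f b)}.
  move=> a b ha' hb hab; apply: hcov; apply: (subsetP hsub).
  by rewrite inE /= ha' hb hab.
have hins : {subset ball e v k <= s}.
  move=> x hx; case/inballP: (hx) => p [hps hp hl].
  case/lastP: p hps hp hl => [|p' z] hps hp hl.
    by rewrite /= in hl; rewrite -hl /s inE eqxx.
  rewrite last_rcons in hl; subst z.
  have hpair : (last v p', x) \in Cov v W.
    apply: (subsetP hsub); rewrite inE /=.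
    have /andP [hp1 he] : path e v p' && e (last v p') x by rewrite -rcons_path.
    rewrite he andbT.
    have hb := ball_prefix hps hp.
    rewrite hx hb // -rcons_cons mem_rcons inE.
    by rewrite mem_last orbT.
  move: hpair; rewrite inE /= => /orP [/cpairs_mem | /cpairs_mem] /andP [] //.
exists f; split=> //.
- move=> a b ha' hb hab.
  by rewrite -(hgf a (hins _ ha')) -(hgf b (hins _ hb)) hab.
- move=> x hx; case/inballP: hx => p [hps hp hl].
  apply/inballP; exists (map f p); split.
  + by rewrite size_map.
  + rewrite -hfv path_cpairs cpairs_map all_map.
    apply/allP=> [[a b]] hab /=.
    have /andP [ha' hb] := cpairs_mem hab.
    have hb1 := ball_prefix hps hp.
    apply: hedge; rewrite ?hb1 //.
    by move: hp; rewrite path_cpairs => /allP /(_ _ hab).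
  + by rewrite -hfv last_map hl.
Qed.
Lemma inEb (T : finType) (e : rel T) v k q :
  (q \in Eb e v k) = [&& q.1 \in ball e v k, q.2 \in ball e v k & e q.1 q.2].
Proof. by rewrite inE. Qed.

Definition Emb (T : finType) (e : rel T) u v k (f : T -> T) :=
  [/\ f u = v, {in ball e u k &, injective f},
    {in ball e u k, forall x, f x \in ball e v k} &
    {in ball e u k &, forall a b, e a b -> e (f a) (f b)}].

Lemma emb_iso (T : finType) (e : rel T) u v k f g :
  Emb e u v k f -> Emb e v u k g -> rooted_iso e u v k.
Proof.
move=> [hfu hfi hfb hfe] [hgv hgi hgb hge].
have cuv : #|(ball e u k)| <= #|(ball e v k)|.
  rewrite -(card_in_imset hfi); apply: subset_leq_card.
  by apply/subsetP=> y /imsetP [x hx ->]; apply: hfb.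
have cvu : #|(ball e v k)| <= #|(ball e u k)|.
  rewrite -(card_in_imset hgi); apply: subset_leq_card.
  by apply/subsetP=> y /imsetP [x hx ->]; apply: hgb.
have himg : f @: (ball e u k) = (ball e v k).
  apply/eqP; rewrite eqEcard card_in_imset // cvu andbT.
  by apply/subsetP=> y /imsetP [x hx ->]; apply: hfb.
pose F (q : T * T) := (f q.1, g q.2).
pose Ff (q : T * T) := (f q.1, f q.2).
pose Gg (q : T * T) := (g q.1, g q.2).
have hFi : {in (Eb e u k) &, injective Ff}.
  move=> [a b] [c d]; rewrite !inEb /= => /and3P [ha hb _] /and3P [hc hd _].
  by move=> [h1 h2]; rewrite (hfi _ _ ha hc h1) (hfi _ _ hb hd h2).
have hGi : {in (Eb e v k) &, injective Gg}.
  move=> [a b] [c d]; rewrite !inEb /= => /and3P [ha hb _] /and3P [hc hd _].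
  by move=> [h1 h2]; rewrite (hgi _ _ ha hc h1) (hgi _ _ hb hd h2).
have sF : Ff @: (Eb e u k) \subset (Eb e v k).
  apply/subsetP=> y /imsetP [[a b] hx ->]; move: hx; rewrite !inEb /=.
  by move=> /and3P [ha hb hab]; rewrite !hfb ?hfe.
have sG : Gg @: (Eb e v k) \subset (Eb e u k).
  apply/subsetP=> y /imsetP [[a b] hx ->]; move: hx; rewrite !inEb /=.
  by move=> /and3P [ha hb hab]; rewrite !hgb ?hge.
have hEimg : Ff @: (Eb e u k) = (Eb e v k).
  apply/eqP; rewrite eqEcard sF card_in_imset //=.
  by rewrite -(card_in_imset hGi); apply: subset_leq_card.
exists f; split=> //.
- move=> y hy; have : y \in f @: (ball e u k) by rewrite himg.
  by case/imsetP=> x hx ->; exists x.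
- move=> a b ha hb; apply/idP/idP; first exact: hfe.
  move=> he.
  have : (f a, f b) \in Ff @: (Eb e u k) by rewrite hEimg inEb /= he !hfb.
  case/imsetP=> [[c d]] hcd [hac hbd].
  move: (hcd); rewrite inEb /= => /and3P [hc hd hcd'].
  have hca : c = a by apply: hfi.
  have hdb : d = b by apply: hfi.
  by rewrite -hca -hdb.
Qed.
Lemma Emb_id (T : finType) (e : rel T) u k : Emb e u u k id.
Proof. by split=> // a b. Qed.

Lemma nbr_exists (T : finType) (e : rel T) u v :
  u != v -> connect e u v -> exists y, e u y.
Proof.
move=> huv /connectP [p hp hl]; case: p hp hl => [|y p] /= hp hl.
  by rewrite hl eqxx in huv.
by case/andP: hp => h _; exists y.
Qed.

Lemma Eb_ge2 (T : finType) (e : rel T) u k y :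
  symmetric e -> irreflexive e -> 0 < k -> e u y -> 2 <= #|Eb e u k|.
Proof.
move=> hsym hirr hk huy.
have hu : u \in ball e u k by apply/inballP; exists [::].
have hy : y \in ball e u k by apply/inballP; exists [:: y]; rewrite /= huy.
have hne : (u, y) != (y, u).
  by apply/eqP=> [[hh]]; rewrite hh hirr in huy.
apply: (@leq_trans #|[set (u, y); (y, u)]|).
  by rewrite cards2 hne.
apply/subset_leq_card/subsetP=> q; rewrite in_set2 => /orP [] /eqP ->;
  by rewrite inEb /= hu hy ?huy //= hsym huy.
Qed.

Lemma to_tuple (T : Type) l (W : seq T) : size W = l -> {t : l.-tuple T | tval t = W}.
Proof. by move=> h; exists (Tuple (introT eqP h)). Qed.

Lemma one_side (T : finType) (e : rel T) u v k l :
  symmetric e -> irreflexive e -> ~~ odd l -> #|Eb e v k| <= l -> forall y, e v y ->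
  exists phi : seq nat,
    anon_dist e u l phi <> anon_dist e v l phi \/ exists f, Emb e v u k f.
Proof.
move=> hsym hirr hl hEl y hvy.
have [W [hp hs hsub]] := @cover_walk T e v k y l hsym hirr hvy hl hEl.
have [t ht] := to_tuple hs.
exists (anon (v :: W)).
case: (eqVneq (anon_dist e u l (anon (v :: W))) (anon_dist e v l (anon (v :: W)))) => h;
  last by left; apply/eqP.
right.
have hv : (0 < anon_dist e v l (anon (v :: W)))%R.
  by apply/anon_dist_gt0; exists t; rewrite ht.
rewrite -h in hv; case/anon_dist_gt0: hv => w' [ha hp'].
have [f hf] := @embed T e u v k W w' hsym hsub hp' (etrans hs (esym (size_tuple w'))) (esym ha).
by exists f.
Qed.
Theorem proposition1 :
  exists C : nat,
  forall (T : finType) (e : rel T),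
    symmetric e -> irreflexive e -> (forall x y : T, connect e x y) ->
  forall (u v : T) (k : nat), 0 < k ->
    ~ rooted_iso e u v k ->
    exists l : nat,
      l <= C * maxn (nedges e u k) (nedges e v k) /\
      exists phi : seq nat, anon_dist e u l phi <> anon_dist e v l phi.
Proof.
exists 6 => T e hsym hirr hconn u v k hk hniso.
case: (eqVneq u v) => huv.
  by subst v; case: hniso; apply: (@emb_iso T e u u k id id); apply: Emb_id.
have [yu hu] := nbr_exists huv (hconn u v).
have [yv hv] := nbr_exists (negbT (introF eqP (fun h => (elimN eqP huv) (esym h)))) (hconn v u).
have hNu := Eb_ge2 hsym hirr hk hu.
have hNv := Eb_ge2 hsym hirr hk hv.
pose l := 2 * maxn #|Eb e u k| #|Eb e v k|.
have hl : ~~ odd l by rewrite /l oddM.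
exists l; split.
  have -> : nedges e u k = #|Eb e u k|./2 by [].
  have -> : nedges e v k = #|Eb e v k|./2 by [].
  rewrite /l; lia.
have hlv : #|Eb e v k| <= l by rewrite /l; lia.
have hlu : #|Eb e u k| <= l by rewrite /l; lia.
have [phi [hphi | [f hf]]] := one_side u hsym hirr hl hlv hv.
  by exists phi.
have [psi [hpsi | [g hg]]] := one_side v hsym hirr hl hlu hu.
  by exists psi => h; apply: hpsi; rewrite h.
by case: hniso; apply: (emb_iso hg hf).
Qed.
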